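(* Let $\mathcal{L}\subseteq\mathbb{S}^n$ be a regular linear subspace, let $\{A_1,\dots,A_c\}$ be a basis of $\mathcal{L}^\perp$, and define $$\mathcal{A}_\mathcal{L}=\{\Sigma\in\mathbb{S}^n : \mathrm{tr}(A_i\cdot\mathrm{adj}(\Sigma))=0\text{ for } i=1,\dots,c\}.$$ Then the ML degree of $\mathcal{L}$ equals the number of invertible matrices in $\mathcal{A}_\mathcal{L}\cap(\mathcal{L}^\perp+S)$ for generic $S\in\mathbb{S}^n$.
   Context: $\mathbb{S}^n$ denotes the space of complex symmetric $n\times n$ matrices; $\mathrm{adj}$ denotes the adjugate matrix. A linear subspace $\mathcal{L}$ is regular if it contains a full-rank matrix. $\mathcal{L}^\perp=\{\Sigma:\mathrm{tr}(K\Sigma)=0\ \forall K\in\mathcal{L}\}$. The reciprocal variety $\mathcal{L}^{-1}$ is the Zariski closure of the set of inverses of invertible matrices in $\mathcal{L}$. The ML degree of $\mathcal{L}$ is the number of matrices in $\mathcal{L}^{-1}\cap(\mathcal{L}^\perp+S)$ for generic $S\in\mathbb{S}^n$. *)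

(* Defs.v *)
From HB Require Import structures.
From mathcomp Require Import all_boot all_order all_algebra.
From mathcomp Require Import reals.
From mathcomp Require Import complex.
From mathcomp Require Import mpoly.
Set Implicit Arguments. Unset Strict Implicit. Unset Printing Implicit Defensive.
Import Order.TTheory GRing.Theory Num.Theory.
Local Open Scope ring_scope.

Notation CC R := (complex R).

Section Defs.
Variables (R : realType) (n : nat).
Local Notation C := (CC R).
Local Notation M := 'M[C]_n.

Definition is_symmx (A : M) : Prop := A^T = A.

Definition mpeval (p : {mpoly C[n * n]}) (A : M) : C :=
  p.@[fun i => mxvec A 0 i].

Definition zariski_closure (X : M -> Prop) : M -> Prop :=
  fun A => forall p : {mpoly C[n * n]},
    (forall B, X B -> mpeval p B = 0) -> mpeval p A = 0.

Definition regular (L : {vspace M}) : Prop :=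
  exists K, K \in L /\ K \in unitmx.

Definition Lperp (L : {vspace M}) (S : M) : Prop :=
  is_symmx S /\ forall K, K \in L -> \tr (K *m S) = 0.

Definition reciprocal (L : {vspace M}) : M -> Prop :=
  zariski_closure (fun A => exists K, [/\ K \in L, K \in unitmx & A = invmx K]).

Definition has_card (P : M -> Prop) (d : nat) : Prop :=
  exists s : seq M, [/\ uniq s, size s = d & forall x, x \in s <-> P x].

(* "for generic S in S^n, Q S holds": Q holds on a nonempty Zariski-open
   subset of S^n, i.e. on a basic open set {f <> 0} with f not identically
   zero on S^n *)
Definition generically (Q : M -> Prop) : Prop :=
  exists f : {mpoly C[n * n]},
    (exists S0, is_symmx S0 /\ mpeval f S0 != 0) /\
    forall S, is_symmx S -> mpeval f S != 0 -> Q S.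

Definition generic_count (F : M -> M -> Prop) (d : nat) : Prop :=
  generically (fun S => has_card (F S) d).

Definition ML_degree_is (L : {vspace M}) (d : nat) : Prop :=
  generic_count (fun S Sig => reciprocal L Sig /\ Lperp L (Sig - S)) d.

Definition A_L (c : nat) (A : c.-tuple M) (Sig : M) : Prop :=
  is_symmx Sig /\ forall i : 'I_c, \tr (tnth A i *m \adj Sig) = 0.

End Defs.

(* Main.v *)
Require Import Defs.
From HB Require Import structures.
From mathcomp Require Import all_boot all_order all_algebra.
From mathcomp Require Import reals complex mpoly.
From mathcomp Require Import zify fingroup perm.
Set Implicit Arguments. Unset Strict Implicit. Unset Printing Implicit Defensive.
Import Order.TTheory GRing.Theory Num.Theory.
Local Open Scope ring_scope.

Section PF.
Variables (F : numFieldType) (nv : nat).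
Implicit Types (f g : ('I_nv -> F) -> F).

Definition pf (d : nat) f :=
  exists p : {mpoly F[nv]}, (msize p <= d.+1)%N /\ forall x, p.@[x] = f x.

Lemma pf_ext d f g : (forall x, f x = g x) -> pf d f -> pf d g.
Proof. by move=> e [p [hp ep]]; exists p; split=> // x; rewrite ep e. Qed.

Lemma pf_ext' d f g : pf d f -> (forall x, f x = g x) -> pf d g.
Proof. by move=> h e; apply: pf_ext h. Qed.

Lemma pf_weak d d' f : (d <= d')%N -> pf d f -> pf d' f.
Proof. by move=> le [p [hp e]]; exists p; split=> //; apply: leq_trans hp _. Qed.

Lemma pf_cst c : pf 0 (fun _ => c).
Proof.
exists c%:MP; split; last by move=> x; rewrite mevalC.
by rewrite msizeC; case: (c != 0).
Qed.

Lemma pf_var l : pf 1 (fun x => x l).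
Proof. by exists 'X_l; split; [rewrite msizeX mdeg1 | move=> x; rewrite mevalXU]. Qed.

Lemma pf_add d1 d2 f g : pf d1 f -> pf d2 g -> pf (maxn d1 d2) (fun x => f x + g x).
Proof.
move=> [p [hp ep]] [q [hq eq]]; exists (p + q); split.
  have := msizeD_le p q; lia.
by move=> x; rewrite mevalD ep eq.
Qed.

Lemma pf_opp d f : pf d f -> pf d (fun x => - f x).
Proof.
move=> [p [hp ep]]; exists (- p); split; first by rewrite msizeN.
by move=> x; rewrite mevalN ep.
Qed.

Lemma pf_mul d1 d2 f g : pf d1 f -> pf d2 g -> pf (d1 + d2) (fun x => f x * g x).
Proof.
move=> [p [hp ep]] [q [hq eq]]; exists (p * q); split; last first.
  by move=> x; rewrite mevalM ep eq.
have [->|p0] := eqVneq p 0; first by rewrite mul0r msize0.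
have [->|q0] := eqVneq q 0; first by rewrite mulr0 msize0.
rewrite msizeM //; move: hp hq; set a := msize p; set b := msize q; move=> hp hq; rewrite -subn1; lia.
Qed.

Lemma pf_sum d (I : Type) (r : seq I) (P : pred I) (G : I -> ('I_nv -> F) -> F) :
  (forall i, pf d (G i)) -> pf d (fun x => \sum_(i <- r | P i) G i x).
Proof.
move=> h; elim: r => [|i r IH].
  by eapply pf_ext'; [exact: (pf_weak (leq0n d) (pf_cst 0)) | move=> x; rewrite big_nil].
eapply (@pf_ext _ (fun x => (if P i then G i x else 0) + \sum_(j <- r | P j) G j x)).
  by move=> x; rewrite big_cons; case: (P i); rewrite ?add0r.
rewrite -[d]maxnn; apply: pf_add IH; case: (P i) => //; exact: pf_weak (leq0n _) (pf_cst 0).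
Qed.

Lemma pf_prod_ord d k (G : 'I_k -> ('I_nv -> F) -> F) :
  (forall i, pf d (G i)) -> pf (k * d) (fun x => \prod_(i < k) G i x).
Proof.
elim: k G => [|k IH] G h.
  by eapply pf_ext'; [exact: (pf_cst 1) | move=> x; rewrite big_ord0].
eapply (@pf_ext _ (fun x => (\prod_(i < k) G (widen_ord (leqnSn k) i) x) * G ord_max x)).
  by move=> x; rewrite big_ord_recr.
rewrite mulSn addnC; apply: pf_mul => //; exact: IH.
Qed.

Lemma pf_exp d e f : pf d f -> pf (e * d) (fun x => f x ^+ e).
Proof.
move=> h; elim: e => [|e IH].
  by eapply pf_ext'; [exact: (pf_cst 1) | move=> x; rewrite expr0].
eapply (@pf_ext _ (fun x => f x * f x ^+ e)); first by move=> x; rewrite exprS.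
by rewrite mulSn; apply: pf_mul.
Qed.

Lemma pf_det k d (MF : ('I_nv -> F) -> 'M[F]_k) :
  (forall i j, pf d (fun x => MF x i j)) -> pf (k * d) (fun x => \det (MF x)).
Proof.
move=> h; eapply (@pf_ext _ (fun x => \sum_(s : 'S_k) (-1) ^+ s * \prod_i MF x i (s i))).
  by [].
apply: pf_sum => s; rewrite -[(k * d)%N]add0n; apply: pf_mul; first exact: pf_cst.
by apply: pf_prod_ord => i; apply: h.
Qed.

Lemma pf_adj k d (MF : ('I_nv -> F) -> 'M[F]_k) :
  (forall i j, pf d (fun x => MF x i j)) ->
  forall i j, pf (k * d) (fun x => \adj (MF x) i j).
Proof.
move=> h i j.
eapply (@pf_ext _ (fun x => (-1) ^+ (j + i) * \det (row' j (col' i (MF x))))).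
  by move=> x; rewrite mxE.
apply: (@pf_weak (0 + k.-1 * d)); first by rewrite add0n leq_mul // leq_pred.
apply: pf_mul; first exact: pf_cst.
by apply: pf_det => a b; eapply pf_ext'; [exact: (h (lift j a) (lift i b)) | move=> x; rewrite !mxE].
Qed.

Lemma pf_mulmx k d (B : 'M[F]_k) (MF : ('I_nv -> F) -> 'M[F]_k) :
  (forall i j, pf d (fun x => MF x i j)) ->
  forall i j, pf d (fun x => (B *m MF x) i j).
Proof.
move=> h i j; eapply (@pf_ext _ (fun x => \sum_l B i l * MF x l j)).
  by move=> x; rewrite mxE.
apply: pf_sum => l; rewrite -[d]add0n; apply: pf_mul; [exact: pf_cst | exact: h].
Qed.

Lemma pf_trace k d (MF : ('I_nv -> F) -> 'M[F]_k) :
  (forall i j, pf d (fun x => MF x i j)) -> pf d (fun x => \tr (MF x)).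
Proof. by move=> h; apply: pf_sum => i; apply: h. Qed.

Definition PF f := exists d, pf d f.

Lemma PF_pf d f : pf d f -> PF f. Proof. by exists d. Qed.
Lemma PF_ext f g : (forall x, f x = g x) -> PF f -> PF g.
Proof. by move=> e [d h]; exists d; apply: pf_ext h. Qed.
Lemma PF_ext' f g : PF f -> (forall x, f x = g x) -> PF g.
Proof. by move=> h e; apply: PF_ext h. Qed.
Lemma PF_cst c : PF (fun _ => c). Proof. exact: PF_pf (pf_cst c). Qed.
Lemma PF_var l : PF (fun x => x l). Proof. exact: PF_pf (pf_var l). Qed.
Lemma PF_add f g : PF f -> PF g -> PF (fun x => f x + g x).
Proof. by move=> [d1 h1] [d2 h2]; exists (maxn d1 d2); apply: pf_add. Qed.
Lemma PF_mul f g : PF f -> PF g -> PF (fun x => f x * g x).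
Proof. by move=> [d1 h1] [d2 h2]; exists (d1 + d2)%N; apply: pf_mul. Qed.
Lemma PF_opp f : PF f -> PF (fun x => - f x).
Proof. by move=> [d h]; exists d; apply: pf_opp. Qed.
Lemma PF_exp e f : PF f -> PF (fun x => f x ^+ e).
Proof. by move=> [d h]; exists (e * d)%N; apply: pf_exp. Qed.

Lemma PF_sum (I : Type) (r : seq I) (P : pred I) (G : I -> ('I_nv -> F) -> F) :
  (forall i, PF (G i)) -> PF (fun x => \sum_(i <- r | P i) G i x).
Proof.
move=> h; elim: r => [|i r IH].
  by eapply PF_ext'; [exact: (PF_cst 0) | move=> x; rewrite big_nil].
eapply (@PF_ext (fun x => (if P i then G i x else 0) + \sum_(j <- r | P j) G j x)).
  by move=> x; rewrite big_cons; case: (P i); rewrite ?add0r.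
apply: PF_add IH; case: (P i) => //; exact: PF_cst.
Qed.

Lemma PF_prod (I : Type) (r : seq I) (P : pred I) (G : I -> ('I_nv -> F) -> F) :
  (forall i, PF (G i)) -> PF (fun x => \prod_(i <- r | P i) G i x).
Proof.
move=> h; elim: r => [|i r IH].
  by eapply PF_ext'; [exact: (PF_cst 1) | move=> x; rewrite big_nil].
eapply (@PF_ext (fun x => (if P i then G i x else 1) * \prod_(j <- r | P j) G j x)).
  by move=> x; rewrite big_cons; case: (P i); rewrite ?mul1r.
apply: PF_mul IH; case: (P i) => //; exact: PF_cst.
Qed.

Lemma PF_meval nw (p : {mpoly F[nw]}) (G : 'I_nw -> ('I_nv -> F) -> F) :
  (forall l, PF (G l)) -> PF (fun x => p.@[fun l => G l x]).
Proof.
move=> h; eapply (@PF_ext (fun x => \sum_(m <- msupp p) p@_m * \prod_i G i x ^+ m i)).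
  by move=> x; rewrite mevalE.
apply: PF_sum => m; apply: PF_mul; first exact: PF_cst.
by apply: PF_prod => i; apply: PF_exp.
Qed.

End PF.
Section NonRoot.
Variable F : numFieldType.

Lemma poly_nonroot (q : {poly F}) : q != 0 -> exists z, q.[z] != 0.
Proof.
move=> q0; set s := [seq i%:R | i <- iota 0 (size q)] : seq F.
have us : uniq s.
  by rewrite map_inj_uniq ?iota_uniq // => a b h; apply/eqP; rewrite -(eqr_nat F) h.
case: (boolP (all (root q) s)) => [hall|/allPn [z _ hz]]; last by exists z.
by have := max_poly_roots q0 hall us; rewrite size_map size_iota ltnn.
Qed.

Lemma rmorph_mpoly_eq n (S : comNzRingType) (f g : {rmorphism {mpoly F[n]} -> S}) :
  (forall c, f c%:MP = g c%:MP) -> (forall i, f 'X_i = g 'X_i) -> forall p, f p = g p.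
Proof.
move=> hc hx p; rewrite (mpolyE p) !rmorph_sum; apply: eq_bigr => m _.
rewrite -mul_mpolyC !rmorphM hc mpolyXE_id !rmorph_prod; congr (_ * _).
by apply: eq_bigr => i _; rewrite !rmorphXn hx.
Qed.

Definition mdrop n (m : 'X_{1..n.+1}) : 'X_{1..n} :=
  [multinom m (widen_ord (leqnSn n) i) | i < n].

Lemma mdrop_inj n (m1 m2 : 'X_{1..n.+1}) :
  m1 ord_max = m2 ord_max -> mdrop m1 = mdrop m2 -> m1 = m2.
Proof.
move=> e1 e2; apply/mnmP => i; case: (unliftP ord_max i) => [j ->|->] //.
have := congr1 (fun m : 'X_{1..n} => m j) e2; rewrite /mdrop !mnmE.
suff -> : lift ord_max j = widen_ord (leqnSn n) j by [].
by apply: val_inj; rewrite /= /bump leqNgt ltn_ord.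
Qed.

Lemma muni_coef n (p : {mpoly F[n.+1]}) (m : 'X_{1..n.+1}) :
  ((muni p)`_(m ord_max))@_(mdrop m) = p@_m.
Proof.
rewrite muniE coef_sum raddf_sum /=.
rewrite (eq_bigr (fun m2 => p@_m2 * ((m2 == m)%:R))); last first.
  move=> m2 _; rewrite coefZ coefXn mulr_natr mcoeffMn mcoeffZ mcoeffX.
  have : (mdrop m2 == mdrop m) && (m ord_max == m2 ord_max) = (m2 == m).
    apply/idP/eqP => [/andP [/eqP a /eqP b]|->]; last by rewrite !eqxx.
    exact: mdrop_inj.
  rewrite /mdrop; case: (_ == _); case: (_ == _); case: (m2 == m) => //= _;
    by rewrite ?mulr0 ?mulr1 ?mulr0n ?mulr1n.
case: (boolP (m \in msupp p)) => hm.
  rewrite (bigD1_seq m) ?msupp_uniq //= eqxx mulr1 big1 ?addr0 // => m2 /negbTE ->.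
  by rewrite mulr0.
rewrite (memN_msupp_eq0 hm) big_seq big1 // => m2 hm2.
case: eqP => [e|_]; last by rewrite mulr0.
by move: hm; rewrite -e hm2.
Qed.

Definition mext n (x : 'I_n -> F) (z : F) : 'I_n.+1 -> F :=
  fun i => if unlift ord_max i is Some j then x j else z.

Lemma widen_lift_max n (k : 'I_n) : widen_ord (leqnSn n) k = lift ord_max k.
Proof. by apply: val_inj; rewrite /= /bump leqNgt ltn_ord. Qed.

Lemma mext_widen n x z (k : 'I_n) : mext x z (widen_ord (leqnSn n) k) = x k.
Proof. by rewrite /mext widen_lift_max liftK. Qed.

Lemma mext_max n x z : mext x z (@ord_max n) = z.
Proof. by rewrite /mext unlift_none. Qed.

Lemma muni_eval n (p : {mpoly F[n.+1]}) x z :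
  (map_poly (meval x) (muni p)).[z] = p.@[mext x z].
Proof.
have := @rmorph_mpoly_eq _ _ (horner_eval z \o map_poly (meval x) \o @muni n F) (meval (mext x z)).
apply => /= [c|i]; rewrite horner_evalE; first by rewrite muniC map_polyC hornerC /= !mevalC.
rewrite muniE msuppX big_seq1 mcoeffX eqxx scale1r -mul_polyC rmorphM /= map_polyC.
rewrite map_polyXn hornerE /= !hornerE mevalX mevalX.
rewrite big_ord_recr /=; congr (_ * _); last by rewrite mext_max.
by apply: eq_bigr => k _; rewrite mnmE mext_widen.
Qed.

Lemma mpoly_nonroot n (p : {mpoly F[n]}) : p != 0 -> exists x, p.@[x] != 0.
Proof.
elim: n p => [|n IH] p p0.
  exists (fun _ => 0); move: p0; rewrite (nvar0_mpolyC p) mevalC mpolyC_eq0 //.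
set m := mlead p.
have c0 : ((muni p)`_(m ord_max))@_(mdrop m) != 0.
  by rewrite muni_coef -mcoeff_msupp mlead_supp.
have u0 : (muni p)`_(m ord_max) != 0.
  by apply: contra c0 => /eqP ->; rewrite mcoeff0.
have [x hx] := IH _ u0.
set q := map_poly (meval x) (muni p).
have q0 : q != 0.
  by apply: contra hx => /eqP q0; rewrite -coef_map -/q q0 coef0.
have [z hz] := poly_nonroot q0.
by exists (mext x z); rewrite -muni_eval.
Qed.

End NonRoot.

Lemma leq_pow_base a b e : (a <= b)%N -> (a ^ e <= b ^ e)%N.
Proof. by move=> h; elim: e => // e IH; rewrite !expnS leq_mul. Qed.

Lemma card_ineq m n E : E = ((m.+1 * n).+1 ^ m)%N ->
  ((m * (E * n) + E * n).+1 ^ m < E.+1 ^ m * E.+1)%N.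
Proof.
move=> hE; set c := (m.+1 * n).+1.
have E0 : (0 < E)%N by rewrite hE expn_gt0.
have h1 : ((m * (E * n) + E * n).+1 <= c * E)%N by rewrite /c; nia.
have h2 : ((m * (E * n) + E * n).+1 ^ m <= E * E ^ m)%N.
  by apply: leq_trans (leq_pow_base m h1) _; rewrite expnMn -hE.
apply: leq_ltn_trans h2 _; rewrite mulnC.
apply: leq_ltn_trans (_ : (E ^ m * E <= E.+1 ^ m * E)%N) _.
  by rewrite leq_mul2r leq_pow_base ?orbT.
by rewrite ltn_pmul2l // expn_gt0.
Qed.
Section Main.
Variables (R : realType) (n : nat).
Local Notation C := (CC R).
Local Notation M := 'M[C]_n.
Variable (L : {vspace M}).
Hypothesis hLsym : forall K, K \in L -> is_symmx K.
Variables (c : nat) (A : c.-tuple M).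
Hypothesis hspan : forall Sig, Sig \in <<A>>%VS <-> Lperp L Sig.

Definition dot (P Q : M) : C := \tr (P *m Q^T).

Lemma dotC P Q : dot P Q = dot Q P.
Proof. by rewrite /dot -mxtrace_tr trmx_mul trmxK. Qed.

Lemma tr_dot P Q : \tr (P *m Q) = dot P Q^T.
Proof. by rewrite /dot trmxK. Qed.

Lemma dot_trl P Q : dot P^T Q = dot P Q^T.
Proof. by rewrite /dot trmxK -trmx_mul mxtrace_tr mxtrace_mulC. Qed.

Lemma dotDr P Q1 Q2 : dot P (Q1 + Q2) = dot P Q1 + dot P Q2.
Proof. by rewrite /dot linearD /= mulmxDr mxtraceD. Qed.

Lemma dotZr P a Q : dot P (a *: Q) = a * dot P Q.
Proof. by rewrite /dot linearZ /= -scalemxAr mxtraceZ. Qed.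

Lemma dotDl P1 P2 Q : dot (P1 + P2) Q = dot P1 Q + dot P2 Q.
Proof. by rewrite dotC dotDr !(dotC Q). Qed.

Lemma dotZl a P Q : dot (a *: P) Q = a * dot P Q.
Proof. by rewrite dotC dotZr dotC. Qed.

Lemma dot_suml (I : Type) (r : seq I) (Pr : pred I) (F : I -> M) Q :
  dot (\sum_(i <- r | Pr i) F i) Q = \sum_(i <- r | Pr i) dot (F i) Q.
Proof.
elim: r => [|i r IH]; first by rewrite !big_nil /dot mul0mx mxtrace0.
by rewrite !big_cons; case: (Pr i); rewrite ?dotDl IH.
Qed.

Lemma dot_mxvec P Q : (mxvec P *m (mxvec Q)^T) 0 0 = dot P Q.
Proof.
rewrite mxE /dot /mxtrace (reindex _ (curry_mxvec_bij _ _)) /=.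
transitivity (\sum_i \sum_k P i k * Q i k).
  by rewrite pair_bigA; apply: eq_bigr => [[i k]] _; rewrite /= !mxE !mxvecE.
by apply: eq_bigr => i _; rewrite mxE; apply: eq_bigr => k _; rewrite !mxE.
Qed.

Let m := \dim L.
Definition bb (j : 'I_m) : M := (vbasis L)`_j.

Lemma bb_mem j : bb j \in L.
Proof. by apply: vbasis_mem; rewrite /bb mem_nth // size_tuple. Qed.

Lemma bb_sym j : is_symmx (bb j).
Proof. exact: hLsym (bb_mem j). Qed.

Lemma sum_inL (x : 'I_m -> C) : \sum_j x j *: bb j \in L.
Proof. by apply: rpred_sum => j _; apply: rpredZ; apply: bb_mem. Qed.

Lemma inL_coord K : K \in L -> K = \sum_j coord (vbasis L) j K *: bb j.
Proof. exact: coord_vbasis. Qed.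


Definition Lm : 'M[C]_(m, n * n) := \matrix_(j < m) mxvec (bb j).

Lemma Lm_row j : row j Lm = mxvec (bb j). Proof. by rewrite rowK. Qed.

Lemma dot_inL B K : (forall j, dot B (bb j) = 0) -> K \in L -> dot B K = 0.
Proof.
move=> h /inL_coord ->; rewrite dotC dot_suml big1 // => j _.
by rewrite dotZl dotC h mulr0.
Qed.

Lemma mulLmT (w : 'rV_(n * n)) j : (w *m Lm^T) 0 j = dot (vec_mx w) (bb j).
Proof.
rewrite -dot_mxvec vec_mxK !mxE; apply: eq_bigr => l _; rewrite !mxE.
by [].
Qed.

Lemma two_neq0 : (2%:R : C) != 0.
Proof. by rewrite pnatr_eq0. Qed.

Lemma perpperp X : is_symmx X -> (forall i : 'I_c, \tr (tnth A i *m X) = 0) -> X \in L.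
Proof.
move=> Xs hA.
have step_a : forall w : 'rV_(n * n), w *m Lm^T = 0 -> dot X (vec_mx w) = 0.
  move=> w hw; set B := vec_mx w.
  have hB j : dot B (bb j) = 0 by rewrite -mulLmT hw mxE.
  set Bs := B + B^T.
  have hBs : Lperp L Bs.
    split; first by rewrite /is_symmx /Bs linearD /= trmxK addrC.
    move=> K hK; rewrite tr_dot /Bs linearD /= trmxK dotDr.
    rewrite -dot_trl (hLsym hK) !(dotC K) (dot_inL hB hK) addr0.
    by [].
  have /hspan hBsA := hBs.
  have e := coord_span hBsA.
  have trBs : \tr (Bs *m X) = 0.
    rewrite e mulmx_suml raddf_sum big1 //= => i _.
    by rewrite -scalemxAl linearZ /= -(tnth_nth 0) hA mulr0.
  have : \tr (Bs *m X) = 2%:R * dot X B.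
    rewrite tr_dot Xs /Bs dotDl dot_trl Xs -mulr2n -mulr_natl dotC.
    by rewrite ?mulr1 mulr_natl.
  by rewrite trBs => /esym /eqP; rewrite mulf_eq0 (negbTE two_neq0) /= => /eqP.
set Wm := kermx Lm^T.
have sub1 : (Lm <= kermx Wm^T)%MS.
  by apply/sub_kermxP; rewrite -[Lm in Lm *m _]trmxK -trmx_mul mulmx_ker trmx0.
have sub2 : (mxvec X <= kermx Wm^T)%MS.
  apply/sub_kermxP; apply/rowP => r.
  have hw : row r Wm *m Lm^T = 0 by rewrite -row_mul mulmx_ker row0.
  have := step_a _ hw; rewrite -dot_mxvec vec_mxK => h.
  rewrite [RHS]mxE -h !mxE; apply: eq_bigr => l _; rewrite !mxE.
  by [].
have rk : \rank (kermx Wm^T) = \rank Lm.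
  by rewrite mxrank_ker mxrank_tr /Wm mxrank_ker mxrank_tr subKn // rank_leq_col.
have sub3 : (kermx Wm^T <= Lm)%MS.
  by rewrite -(mxrank_leqif_sup sub1).2 rk.
have /submxP [D hD] := submx_trans sub2 sub3.
have -> : X = \sum_j D 0 j *: bb j.
  apply: (can_inj mxvecK); rewrite hD mulmx_sum_row linear_sum /=.
  by apply: eq_bigr => j _; rewrite Lm_row linearZ.
exact: sum_inL.
Qed.

Lemma Lm_free : row_free Lm.
Proof.
rewrite -kermx_eq0; apply/eqP/row_matrixP => r; rewrite row0.
set u := row r (kermx Lm).
have hu : u *m Lm = 0 by rewrite /u -row_mul mulmx_ker row0.
have fr := basis_free (vbasisP L).
have hsum : \sum_j u 0 j *: bb j = 0.
  apply: (can_inj mxvecK); transitivity (u *m Lm); last by rewrite hu linear0.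
  rewrite mulmx_sum_row linear_sum /=.
  by apply: eq_bigr => j _; rewrite Lm_row linearZ.
by apply/rowP => j; rewrite [RHS]mxE; exact: (freeP fr _ hsum j).
Qed.

Lemma pi_surj (y : 'I_m -> C) : exists S, is_symmx S /\ forall j, \tr (bb j *m S) = y j.
Proof.
have /row_freeP [Bi hBi] := Lm_free.
set yv : 'rV_m := \row_j y j.
set v : 'rV_(n * n) := (Bi *m yv^T)^T.
have hv : Lm *m v^T = yv^T by rewrite trmxK mulmxA hBi mul1mx.
set X := vec_mx v.
have hX j : dot (bb j) X = y j.
  rewrite -dot_mxvec /X vec_mxK.
  have := congr1 (fun Z : 'M[C]_(m, 1) => Z j 0) hv; rewrite !mxE => <-.
  by apply: eq_bigr => l _; rewrite !mxE.
exists (2%:R^-1 *: (X + X^T)); split.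
  by rewrite /is_symmx linearZ /= linearD /= trmxK addrC.
move=> j; rewrite tr_dot linearZ /= linearD /= trmxK dotZr dotDr.
rewrite -dot_trl (bb_sym j) hX -mulr2n -(mulr_natl (y j)) mulrA mulVf ?mul1r //.
exact: two_neq0.
Qed.


Definition matof (x : 'I_(n * n) -> C) : M := \matrix_(i, k) x (mxvec_index i k).

Lemma matof_mxvec Sig : matof (fun l => mxvec Sig 0 l) = Sig.
Proof. by apply/matrixP => i k; rewrite mxE mxvecE. Qed.

Lemma PFM_poly (G : M -> C) : PF (fun x => G (matof x)) ->
  exists p, forall Sig, mpeval p Sig = G Sig.
Proof. by move=> [d [p [_ e]]]; exists p => Sig; rewrite /mpeval e matof_mxvec. Qed.

Lemma pf_matof i k : pf 1 (fun x => matof x i k).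
Proof. by eapply pf_ext'; [exact: (pf_var _ (mxvec_index i k)) | move=> x; rewrite mxE]. Qed.

Lemma PF_det_matof : PF (fun x => \det (matof x)).
Proof. exact: PF_pf (pf_det pf_matof). Qed.

Lemma PF_trmul_matof (B : M) : PF (fun x => \tr (B *m matof x)).
Proof. exact: PF_pf (pf_trace (pf_mulmx B pf_matof)). Qed.

Lemma PF_tradj_matof (B : M) : PF (fun x => \tr (B *m \adj (matof x))).
Proof. exact: PF_pf (pf_trace (pf_mulmx B (pf_adj pf_matof))). Qed.

Lemma recip_vanish (G : M -> C) : PF (fun x => G (matof x)) ->
  (forall K, K \in L -> K \in unitmx -> G (invmx K) = 0) ->
  forall Sig, reciprocal L Sig -> G Sig = 0.
Proof.
move=> /PFM_poly [p hp] hG Sig hS; rewrite -hp; apply: hS => B [K [hK uK ->]].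
by rewrite hp hG.
Qed.

Lemma recip_sym Sig : reciprocal L Sig -> is_symmx Sig.
Proof.
move=> hS; apply/matrixP => i k; rewrite mxE; apply/eqP; rewrite -subr_eq0; apply/eqP.
apply: (recip_vanish (G := fun S => S k i - S i k)) hS.
  apply: PF_add; first by apply: PF_pf (pf_matof k i).
  by apply: PF_opp; apply: PF_pf (pf_matof i k).
move=> K hK uK; have e : (invmx K)^T = invmx K by rewrite trmx_inv (hLsym hK).
by rewrite -{1}e mxE subrr.
Qed.

Lemma adj_unit (B : M) : B \in unitmx -> \adj B = \det B *: invmx B.
Proof.
move=> uB; rewrite /invmx uB scalerA mulfV ?scale1r // -unitfE -unitmxE.
Qed.

Lemma A_perp i K : K \in L -> \tr (K *m tnth A i) = 0.
Proof.
move=> hK; have : tnth A i \in <<A>>%VS by apply: memv_span; apply: mem_tnth.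
by move/hspan => [_ h]; apply: h.
Qed.

Lemma recip_AL Sig : reciprocal L Sig -> forall i, \tr (tnth A i *m \adj Sig) = 0.
Proof.
move=> hS i; apply: (recip_vanish (G := fun S => \tr (tnth A i *m \adj S))) hS.
  exact: PF_tradj_matof.
move=> K hK uK; rewrite adj_unit ?unitmx_inv // invmxK -scalemxAr mxtraceZ.
by rewrite mxtrace_mulC A_perp // mulr0.
Qed.

Lemma AL_recip Sig : Sig \in unitmx -> A_L A Sig -> reciprocal L Sig.
Proof.
move=> uS [sS hA]; set X := invmx Sig.
have XL : X \in L.
  apply: perpperp; first by rewrite /is_symmx /X trmx_inv sS.
  by move=> i; rewrite /X /invmx uS -scalemxAr mxtraceZ hA mulr0.
move=> p hp; apply: hp; exists X; split => //; first by rewrite unitmx_inv.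
by rewrite /X invmxK.
Qed.


Definition Kx (x : 'I_m -> C) : M := \sum_j x j *: bb j.

Lemma pf_Kx i k : pf 1 (fun x => Kx x i k).
Proof.
eapply (pf_ext (f := fun x => \sum_j x j * bb j i k)).
  by move=> x; rewrite /Kx summxE; apply: eq_bigr => j _; rewrite mxE.
apply: pf_sum => j; rewrite -[1%N]addn0; apply: pf_mul; [exact: (pf_var _ j) | exact: pf_cst].
Qed.

Definition dlt (x : 'I_m -> C) := \det (Kx x).
Definition aa j (x : 'I_m -> C) := \tr (bb j *m \adj (Kx x)).

Lemma pf_dlt : pf (n * 1) dlt. Proof. exact: pf_det pf_Kx. Qed.
Lemma pf_aa j : pf (n * 1) (aa j).
Proof. exact: pf_trace (pf_mulmx (bb j) (pf_adj pf_Kx)). Qed.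

Definition Eb := ((m.+1 * n).+1 ^ m)%N.
Definition Tb := (m * (Eb * n) + Eb * n)%N.
Definition I1 := ({ffun 'I_m -> 'I_Eb.+1} * 'I_Eb.+1)%type.

Definition PP (io : I1) (x : 'I_m -> C) :=
  (\prod_j (aa j x ^+ io.1 j * dlt x ^+ (Eb - io.1 j))) * dlt x ^+ (Eb - io.2).

Lemma pf_weak' d d' (f : ('I_m -> C) -> C) : pf d f -> (d <= d')%N -> pf d' f.
Proof. by move=> h le; apply: pf_weak le h. Qed.

Lemma pf_PP io : pf Tb (PP io).
Proof.
apply: pf_mul.
  apply: pf_prod_ord => j.
  eapply pf_weak'; first exact: (pf_mul (pf_exp (io.1 j) (pf_aa j)) (pf_exp (Eb - io.1 j) pf_dlt)).
  by rewrite -mulnDl subnKC ?muln1 // -ltnS ltn_ord.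
eapply pf_weak'; first exact: (pf_exp (Eb - io.2) pf_dlt).
by rewrite muln1 leq_mul2r leq_subr orbT.
Qed.

Lemma dependence : exists w : 'I_#|{: I1}| -> C, (exists r1, w r1 != 0) /\
  forall x, \sum_r w r * PP (enum_val r) x = 0.
Proof.
have [pp hpp] := fin_all_exists pf_PP.
pose Bx := {ffun 'I_m -> 'I_Tb.+1}.
pose mono (s : Bx) : 'X_{1..m} := [multinom (s i : nat) | i < m].
pose Mt : 'M[C]_(#|{: I1}|, #|{: Bx}|) :=
  \matrix_(r, s) (pp (enum_val r))@_(mono (enum_val s)).
have ltc : (#|{: Bx}| < #|{: I1}|)%N.
  rewrite /I1 card_prod !card_ffun !card_ord; exact: card_ineq.
have nf : ~~ row_free Mt.
  rewrite /row_free; apply/negP => /eqP e.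
  by have := rank_leq_col Mt; rewrite e leqNgt ltc.
have [r0 hr0] : exists r0, row r0 (kermx Mt) != 0.
  case: (pickP (fun r => row r (kermx Mt) != 0)) => [r h|h]; first by exists r.
  exfalso; move: nf; rewrite -kermx_eq0 => /negP; apply; apply/eqP/row_matrixP => r.
  by rewrite row0; move: (h r) => /negbFE /eqP.
set w := row r0 (kermx Mt).
have hw : w *m Mt = 0 by rewrite /w -row_mul mulmx_ker row0.
have [r1 hr1] : exists r1, w 0 r1 != 0.
  case: (pickP (fun r => w 0 r != 0)) => [r h|h]; first by exists r.
  move: hr0; rewrite -/w => /eqP []; apply/rowP => r.
  by move: (h r) => /negbFE /eqP ->; rewrite mxE.
exists (w 0); split; first by exists r1.
set Q := \sum_r w 0 r *: pp (enum_val r).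
have hQ : Q = 0.
  apply/mpolyP => mu; rewrite mcoeff0 /Q raddf_sum /=.
  under eq_bigr do rewrite mcoeffZ.
  case: (boolP [forall i, (mu i <= Tb)%N]) => hmu.
    pose s : Bx := [ffun i => inord (mu i)].
    have ms : mono s = mu.
      by apply/mnmP => i; rewrite mnmE ffunE inordK // ltnS; exact: (forallP hmu i).
    have := congr1 (fun Z : 'M[C]_(1, #|{: Bx}|) => Z 0 (enum_rank s)) hw.
    rewrite [LHS]mxE [RHS]mxE => h; apply: (etrans _ h); apply: eq_bigr => r _.
    by congr (_ * _); rewrite /Mt mxE enum_rankK ms.
  move/forallPn: hmu => -[i hi]; rewrite -ltnNge in hi.
  rewrite big1 // => r _; rewrite memN_msupp_eq0 ?mulr0 //.
  apply: msize_mdeg_ge; apply: leq_trans (proj1 (hpp _)) _.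
  by apply: leq_trans hi _; rewrite mdegE (bigD1 i) //= leq_addr.
move=> x; have := congr1 (meval x) hQ; rewrite meval0 /Q raddf_sum /= => h.
by apply: (etrans _ h); apply: eq_bigr => r _; rewrite mevalZ (proj2 (hpp _)).
Qed.

Lemma PP_eval K io : K \in L -> K \in unitmx ->
  PP io (fun l => coord (vbasis L) l K) =
  ((\prod_(j < m) \det K ^+ Eb) * \det K ^+ Eb) *
  ((\prod_j (\tr (bb j *m invmx K)) ^+ io.1 j) * \det (invmx K) ^+ io.2).
Proof.
move=> hK uK; set x := (fun l => _).
have eK : Kx x = K by rewrite /Kx -inL_coord.
have d0 : \det K != 0 by rewrite -unitfE -unitmxE.
have ha j : aa j x = \det K * \tr (bb j *m invmx K).
  by rewrite /aa eK adj_unit // -scalemxAr mxtraceZ.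
rewrite /PP /dlt eK det_inv.
have e1 j : aa j x ^+ io.1 j * \det K ^+ (Eb - io.1 j) =
            \det K ^+ Eb * (\tr (bb j *m invmx K)) ^+ io.1 j.
  rewrite ha exprMn mulrAC -exprD subnKC //.
  by rewrite -ltnS ltn_ord.
rewrite (eq_bigr _ (fun j _ => e1 j)) big_split /=.
have hk : (io.2 <= Eb)%N by rewrite -ltnS ltn_ord.
have e2 : \det K ^+ (Eb - io.2) = \det K ^+ Eb * (\det K)^-1 ^+ io.2.
  have hE : \det K ^+ Eb = \det K ^+ (Eb - io.2) * \det K ^+ io.2.
    by rewrite -exprD subnK.
  rewrite hE exprVn -mulrA mulfV ?mulr1 //.
  exact: expf_neq0.
by rewrite e2 -!mulrA; congr (_ * _); rewrite mulrCA.
Qed.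

Definition kk (r : 'I_#|{: I1}|) : nat := (enum_val r).2.
Definition qv (r : 'I_#|{: I1}|) (S : M) : C :=
  \prod_j (\tr (bb j *m S)) ^+ (enum_val r).1 j.
Definition monoa (r : 'I_#|{: I1}|) : 'X_{1..m} :=
  [multinom ((enum_val r).1 j : nat) | j < m].

Lemma rel1 (w : 'I_#|{: I1}| -> C) : (forall x, \sum_r w r * PP (enum_val r) x = 0) ->
  forall K, K \in L -> K \in unitmx ->
  \sum_r w r * (qv r (invmx K) * \det (invmx K) ^+ kk r) = 0.
Proof.
move=> hw K hK uK; have := hw (fun l => coord (vbasis L) l K).
have d0 : \det K != 0 by rewrite -unitfE -unitmxE.
have D0 : (\prod_(j < m) \det K ^+ Eb) * \det K ^+ Eb != 0.
  by apply: mulf_neq0; [apply/prodf_neq0 => j _|]; exact: expf_neq0.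
under eq_bigr do rewrite PP_eval // mulrCA.
by rewrite -mulr_sumr => /eqP; rewrite mulf_eq0 (negbTE D0) /= => /eqP.
Qed.


Lemma key : exists g : {mpoly C[n * n]},
  (exists S0, is_symmx S0 /\ mpeval g S0 != 0) /\
  forall S Sig, mpeval g S != 0 -> reciprocal L Sig -> Lperp L (Sig - S) ->
    Sig \in unitmx.
Proof.
have [w [[r1 hr1] hw]] := dependence.
have R1 := rel1 hw.
case: (@arg_minnP _ r1 (fun r => w r != 0) kk hr1) => rs hrs hmin.
pose G (S : M) := \sum_r w r * (qv r S * \det S ^+ (kk r - kk rs)).
pose H (S : M) := \sum_r (w r * (kk r <= kk rs)%:R) * qv r S.
have PFG : PF (fun x => G (matof x)).
  apply: PF_sum => r; apply: PF_mul; first exact: PF_cst.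
  apply: PF_mul; last by apply: PF_exp; exact: PF_det_matof.
  apply: PF_prod => j; apply: PF_exp; exact: PF_trmul_matof.
have PFH : PF (fun x => H (matof x)).
  apply: PF_sum => r; apply: PF_mul; first exact: PF_cst.
  apply: PF_prod => j; apply: PF_exp; exact: PF_trmul_matof.
have G0 : forall Sig, reciprocal L Sig -> G Sig = 0.
  apply: recip_vanish => // K hK uK.
  have dn0 : \det (invmx K) != 0 by rewrite -unitfE -unitmxE unitmx_inv.
  have e : \det (invmx K) ^+ kk rs * G (invmx K) =
           \sum_r w r * (qv r (invmx K) * \det (invmx K) ^+ kk r).
    rewrite mulr_sumr; apply: eq_bigr => r _.
    case: (eqVneq (w r) 0) => [->|wr]; first by rewrite !mul0r mulr0.
    rewrite mulrCA; congr (_ * _); rewrite mulrCA -exprD subnKC //; exact: hmin.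
  have := R1 K hK uK; rewrite -e => /eqP; rewrite mulf_eq0 expf_eq0 (negbTE dn0) andbF /=.
  by move/eqP.
have GH : forall Sig, \det Sig = 0 -> G Sig = H Sig.
  move=> Sig d0; rewrite /G /H d0; apply: eq_bigr => r _.
  by rewrite expr0n subn_eq0 [qv r Sig * _]mulrC mulrA.
have Hpi : forall S1 S2, (forall j, \tr (bb j *m S1) = \tr (bb j *m S2)) -> H S1 = H S2.
  move=> S1 S2 e; rewrite /H; apply: eq_bigr => r _; rewrite /qv; congr (_ * _).
  by apply: eq_bigr => j _; rewrite e.
pose hp : {mpoly C[m]} := \sum_r (w r * (kk r <= kk rs)%:R) *: 'X_[monoa r].
have hp_eval : forall S, hp.@[fun j => \tr (bb j *m S)] = H S.
  move=> S; rewrite /hp raddf_sum /= /H; apply: eq_bigr => r _.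
  rewrite mevalZ mevalX /qv; congr (_ * _); apply: eq_bigr => j _.
  by rewrite /monoa mnmE.
have c_rs : hp@_(monoa rs) = w rs.
  rewrite /hp raddf_sum (bigD1 rs) //= big1 ?addr0.
    by rewrite mcoeffZ mcoeffX eqxx leqnn !mulr1.
  move=> r hr; rewrite mcoeffZ mcoeffX.
  case: (eqVneq (w r) 0) => [->|wr]; first by rewrite !mul0r.
  case: leqP => hk; last by rewrite mulr0 mul0r.
  case: eqP => [e|]; last by rewrite mulr0.
  exfalso; move/negP: hr; apply; apply/eqP; apply: enum_val_inj.
  have kE : kk r = kk rs by apply/eqP; rewrite eqn_leq hk hmin.
  move: kE e; rewrite /kk /monoa.
  case: (enum_val r) => a1 k1; case: (enum_val rs) => a2 k2 /= kE e.
  congr (_, _); last by apply: val_inj.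
  apply/ffunP => j; apply: val_inj.
  by have := congr1 (fun mm : 'X_{1..m} => mm j) e; rewrite !mnmE.
have hp0 : hp != 0.
  by apply/eqP => h0; move: hrs; rewrite -c_rs h0 mcoeff0 eqxx.
have [y0 hy0] := mpoly_nonroot hp0.
have [S0 [sS0 hS0]] := pi_surj y0.
have [g hg] := PFM_poly PFH.
exists g; split.
  by exists S0; split => //; rewrite hg -hp_eval (meval_eq _ hS0).
move=> S Sig gS hR hP; case: (boolP (Sig \in unitmx)) => // nu; exfalso.
have d0 : \det Sig = 0.
  by apply/eqP; move: nu; rewrite unitmxE unitfE negbK.
have := G0 Sig hR; rewrite GH // (Hpi Sig S) -?hg => [e|j].
  by move: gS; rewrite e eqxx.
have := (proj2 hP) _ (bb_mem j); rewrite mulmxBr linearB /= => /eqP.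
by rewrite subr_eq0 => /eqP.
Qed.

End Main.

Lemma has_card_ext (R : realType) (n : nat) (P Q : 'M[CC R]_n -> Prop) d :
  (forall x, P x <-> Q x) -> has_card P d -> has_card Q d.
Proof.
move=> e [s [u sz h]]; exists s; split => // x.
by split => [/h/e|/e/h].
Qed.

Lemma line_poly (R : realType) (n : nat) (f : {mpoly (CC R)[n * n]}) (S2 D : 'M[CC R]_n) :
  exists q : {mpoly (CC R)[1]}, forall x, q.@[x] = mpeval f (S2 + x ord0 *: D).
Proof.
have : PF (fun x : 'I_1 -> CC R => f.@[fun l => mxvec S2 0 l + x ord0 * mxvec D 0 l]).
  apply: PF_meval => l; apply: PF_add; first exact: PF_cst.
  apply: PF_mul; [exact: (PF_var _ ord0) | exact: PF_cst].
move=> [d [q [_ e]]]; exists q => x; rewrite e /mpeval; apply: meval_eq => l.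
by rewrite linearD linearZ /= !mxE.
Qed.

Lemma generic_mul (R : realType) (n : nat) (f1 f2 : {mpoly (CC R)[n * n]}) S1 S2 :
  is_symmx S1 -> mpeval f1 S1 != 0 -> is_symmx S2 -> mpeval f2 S2 != 0 ->
  exists S, is_symmx S /\ mpeval (f1 * f2) S != 0.
Proof.
move=> s1 h1 s2 h2; set D := S1 - S2.
have [q1 e1] := line_poly f1 S2 D.
have [q2 e2] := line_poly f2 S2 D.
have q10 : q1 != 0.
  apply/eqP => z; move: h1; have := e1 (fun _ => 1).
  by rewrite z meval0 scale1r /D addrC subrK => <-; rewrite eqxx.
have q20 : q2 != 0.
  apply/eqP => z; move: h2; have := e2 (fun _ => 0).
  by rewrite z meval0 scale0r addr0 => <-; rewrite eqxx.
have [x hx] := mpoly_nonroot (mulf_neq0 q10 q20).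
exists (S2 + x ord0 *: D); split.
  by rewrite /is_symmx linearD linearZ /= s2 /D linearB /= s1 s2.
by rewrite /mpeval mevalM -/(mpeval f1 _) -/(mpeval f2 _) -e1 -e2 -mevalM.
Qed.

Unset Implicit Arguments.

Theorem proposition2p7 (R : realType) (n : nat) (L : {vspace 'M[CC R]_n})
  (hLsym : forall K, K \in L -> is_symmx K)
  (hreg : regular L)
  (c : nat) (A : c.-tuple 'M[CC R]_n)
  (hfree : free A)
  (hspan : forall Sig, Sig \in <<A>>%VS <-> Lperp L Sig) :
  forall d : nat,
    ML_degree_is L d <->
    generic_count
      (fun S Sig => [/\ Sig \in unitmx, A_L A Sig & Lperp L (Sig - S)]) d.
Proof.
move=> d.
have [g [[S0 [sS0 gS0]] hg]] := key hLsym.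
have eqv : forall S, mpeval g S != 0 -> forall Sig,
   (reciprocal L Sig /\ Lperp L (Sig - S)) <->
   [/\ Sig \in unitmx, A_L A Sig & Lperp L (Sig - S)].
  move=> S gS Sig; split.
    move=> [hR hP]; split => //; first exact: hg gS hR hP.
    split; first by apply: (recip_sym hLsym); exact: hR.
    by apply: (recip_AL hspan); exact: hR.
  move=> [uS hA hP]; split => //; apply: (AL_recip hLsym hspan); [exact: uS | exact: hA].
split => -[f [[S1 [sS1 fS1]] hf]].
  have [S [sS hS]] := generic_mul sS1 fS1 sS0 gS0.
  exists (f * g); split; first by exists S.
  move=> S' sS'; rewrite /mpeval mevalM mulf_eq0 negb_or => /andP [fS gS].
  apply: has_card_ext (hf S' sS' fS) => Sig; exact: eqv.
have [S [sS hS]] := generic_mul sS1 fS1 sS0 gS0.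
exists (f * g); split; first by exists S.
move=> S' sS'; rewrite /mpeval mevalM mulf_eq0 negb_or => /andP [fS gS].
apply: has_card_ext (hf S' sS' fS) => Sig; apply: iff_sym; exact: eqv.
Qed.
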